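(* Let $\mathbf{P}=(P,\le,\mathcal T)$ be a $2$-separated topological poset in which the clopen final segments together with the clopen initial segments generate (form a subbase for) the topology $\mathcal T$. Then $\mathbf{P}$ is reflexive if and only if for every closed final segment $B\subseteq P$ and every closed initial segment $C\subseteq P$ with $C<B$, there exists a clopen final segment $u$ such that $B\subseteq u$ and $C\cap u=\emptyset$.
   Context: A topological poset $(P,\le,\mathcal T)$ is a poset with a Hausdorff topology; it is $2$-separated if it admits a continuous order-embedding into a power of the two-element chain $\mathbf{O}=(\{0,1\},\le)$, $0<1$, with the product topology. Final (initial) segments are upward (downward) closed subsets. For $A,B\subseteq P$, $C<B$ means $x<y$ for all $x\in C$, $y\in B$. Let $\mathbf{L}=(\{0,1\},\wedge,\vee,0,1)$ be the two-element bounded distributive lattice. $\mathbf{P}^*$ is the set of continuous order-preserving maps $P\to\{0,1\}$ with the bounded-lattice structure (pointwise $\wedge,\vee$, constants $0,1$) and the product topology induced from $\mathbf{L}^P$; $\mathbf{P}^{**}$ is the set of continuous bounded-lattice homomorphisms $\mathbf{P}^*\to\mathbf{L}$. $\mathbf{P}$ is reflexive if the evaluation map $P\to\mathbf{P}^{**}$, $x\mapsto(f\mapsto f(x))$, is onto. *)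

(* Defs.v *)
From HB Require Import structures.
From mathcomp Require Import all_boot all_order all_algebra.
From mathcomp Require Import all_classical all_reals all_analysis.
Set Implicit Arguments. Unset Strict Implicit. Unset Printing Implicit Defensive.
Local Open Scope classical_set_scope.

Definition is_poset (T : Type) (le : T -> T -> Prop) : Prop :=
  [/\ (forall x, le x x),
      (forall x y, le x y -> le y x -> x = y) &
      (forall x y z, le x y -> le y z -> le x z)].

Definition final_segment (T : Type) (le : T -> T -> Prop) (A : set T) : Prop :=
  forall x y, A x -> le x y -> A y.
Definition initial_segment (T : Type) (le : T -> T -> Prop) (A : set T) : Prop :=
  forall x y, A y -> le x y -> A x.

Definition set_lt (T : Type) (le : T -> T -> Prop) (C B : set T) : Prop :=
  forall x y, C x -> B y -> le x y /\ x <> y.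

(* 2-separated: a continuous order-embedding into a power O^I of the
   two-element chain 0 < 1 (bool with false < true, discrete topology),
   with the product topology. *)
Definition two_separated (T : topologicalType) (le : T -> T -> Prop) : Prop :=
  exists (I : Type) (e : T -> {ptws I -> bool}),
    continuous e /\
    forall x y, le x y <-> (forall i, e x i ==> e y i).

Definition clopen_segment (T : topologicalType) (le : T -> T -> Prop)
  (U : set T) : Prop :=
  clopen U /\ (final_segment le U \/ initial_segment le U).

Definition is_subbase (T : topologicalType) (S : set T -> Prop) : Prop :=
  forall A : set T, open A <->
    (forall x, A x -> exists (n : nat) (F : 'I_n -> set T),
        [/\ (forall i, S (F i)), (forall i, F i x) &
            (forall y, (forall i, F i y) -> A y)]).

(* P^* : continuous order-preserving maps P -> {0,1}, as a subset of
   L^P with the product topology. *)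
Definition Pstar (T : topologicalType) (le : T -> T -> Prop)
  : set {ptws T -> bool} :=
  [set f | continuous (f : T -> bool) /\ (forall x y, le x y -> f x ==> f y)].

Definition lattice_hom_on (T : topologicalType) (le : T -> T -> Prop)
  (h : {ptws T -> bool} -> bool) : Prop :=
  [/\ (forall f g, Pstar le f -> Pstar le g ->
         h ((fun x => f x && g x) : {ptws T -> bool}) = h f && h g),
      (forall f g, Pstar le f -> Pstar le g ->
         h ((fun x => f x || g x) : {ptws T -> bool}) = h f || h g),
      h ((fun _ => false) : {ptws T -> bool}) = false &
      h ((fun _ => true) : {ptws T -> bool}) = true].

(* P^** : continuous bounded-lattice homomorphisms P^* -> L, where P^* carries
   the subspace topology of the product topology (only the restriction of h
   to P^* matters). *)
Definition Pstarstar (T : topologicalType) (le : T -> T -> Prop)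
  (h : {ptws T -> bool} -> bool) : Prop :=
  lattice_hom_on le h /\ {within Pstar le, continuous h}.

Definition reflexive_tposet (T : topologicalType) (le : T -> T -> Prop) : Prop :=
  forall h, Pstarstar le h -> exists x : T, forall f, Pstar le f -> h f = f x.

(* Main.v *)
Require Import Defs.
From HB Require Import structures.
From mathcomp Require Import all_boot all_order all_algebra.
From mathcomp Require Import all_classical all_reals all_analysis.
Local Open Scope classical_set_scope.
Set Implicit Arguments. Unset Strict Implicit.

Section Aux.
Variable T : topologicalType.

Lemma open_cst (P : Prop) : open (fun _ : T => P).
Proof.
case: (pselect P) => a.
  have -> : (fun _ : T => P) = setT by apply/seteqP; split => x.
  exact: openT.
have -> : (fun _ : T => P) = set0 by apply/seteqP; split => x // /a.
exact: open0.
Qed.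

Lemma bool_contP (f : T -> bool) :
  continuous f <-> open [set x | f x] /\ open [set x | ~~ f x].
Proof.
split.
  move/continuousP => H; split.
    have -> : [set x | f x] = f @^-1` [set true].
      by apply/seteqP; split => x /=; case: (f x).
    by apply: H; apply: discrete_open.
  have -> : [set x | ~~ f x] = f @^-1` [set false].
    by apply/seteqP; split => x /=; case: (f x).
  by apply: H; apply: discrete_open.
case=> h1 h2; apply/continuousP => A _.
have -> : f @^-1` A = ([set x | f x] `&` (fun _ => A true)) `|`
                      ([set x | ~~ f x] `&` (fun _ => A false)).
  apply/seteqP; split => x /=; case: (f x) => //=.
  - by move=> ?; left.
  - by move=> ?; right.
  - by case=> [[]|[]].
  - by case=> [[]|[]].
by apply: openU; apply: openI => //; apply: open_cst.
Qed.

Lemma bool_cont_clopen (f : T -> bool) :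
  continuous f -> clopen [set x | f x].
Proof.
move=> /bool_contP [h1 h2]; split => //.
have -> : [set x | f x] = ~` [set x | ~~ f x].
  by apply/seteqP; split => x /=; case: (f x).
by apply: open_closedC.
Qed.

Lemma clopen_cont (u : set T) : clopen u -> continuous (fun x => `[< u x >]).
Proof.
case=> o c; apply/bool_contP; split.
  by have -> : [set x | `[< u x >]] = u by apply/seteqP; split => x /= /asboolP.
have -> : [set x | ~~ `[< u x >]] = ~` u.
  by apply/seteqP; split => x /=; case: asboolP.
by apply: closed_openC.
Qed.

Lemma and_cont (f g : T -> bool) : continuous f -> continuous g ->
  continuous (fun x => f x && g x).
Proof.
move=> /bool_contP [f1 f2] /bool_contP [g1 g2]; apply/bool_contP; split.
  have -> : [set x | f x && g x] = [set x | f x] `&` [set x | g x].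
    by apply/seteqP; split => x /=; case: (f x); case: (g x) => //=; case.
  exact: openI.
have -> : [set x | ~~ (f x && g x)] = [set x | ~~ f x] `|` [set x | ~~ g x].
  apply/seteqP; split => x /=; case: (f x); case: (g x) => //=;
    by [left|right|case].
exact: openU.
Qed.

Lemma or_cont (f g : T -> bool) : continuous f -> continuous g ->
  continuous (fun x => f x || g x).
Proof.
move=> /bool_contP [f1 f2] /bool_contP [g1 g2]; apply/bool_contP; split.
  have -> : [set x | f x || g x] = [set x | f x] `|` [set x | g x].
    apply/seteqP; split => x /=; case: (f x); case: (g x) => //=;
    by [left|right|case].
  exact: openU.
have -> : [set x | ~~ (f x || g x)] = [set x | ~~ f x] `&` [set x | ~~ g x].
  by apply/seteqP; split => x /=; case: (f x); case: (g x) => //=; case.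
exact: openI.
Qed.

End Aux.

Lemma proj_cont_gen (I : Type) (i : I) :
  continuous (fun g : {ptws I -> bool} => g i).
Proof.
move=> f.
have /cvg_sup/(_ i) h : (nbhs f) --> (f : {ptws I -> bool}) by apply: cvg_id.
move=> P Pn.
have := @initial_continuous _ _ (fun g : I -> bool => g i) f P Pn.
move/h.
done.
Qed.

Section PS.
Variables (T : topologicalType) (le : T -> T -> Prop).

Lemma Pstar_and (f g : {ptws T -> bool}) : Pstar le f -> Pstar le g ->
  Pstar le ((fun x => f x && g x) : {ptws T -> bool}).
Proof.
move=> [cf mf] [cg mg]; split; first exact: and_cont.
move=> x y lxy; apply/implyP => /andP [fx gx].
by rewrite (implyP (mf _ _ lxy) fx) (implyP (mg _ _ lxy) gx).
Qed.

Lemma Pstar_or (f g : {ptws T -> bool}) : Pstar le f -> Pstar le g ->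
  Pstar le ((fun x => f x || g x) : {ptws T -> bool}).
Proof.
move=> [cf mf] [cg mg]; split; first exact: or_cont.
move=> x y lxy; apply/implyP => /orP [fx|gx].
  by rewrite (implyP (mf _ _ lxy) fx).
by rewrite (implyP (mg _ _ lxy) gx) orbT.
Qed.

Lemma Pstar_cst (b : bool) : Pstar le ((fun _ => b) : {ptws T -> bool}).
Proof. by split; [exact: cst_continuous | move=> x y _; exact: implybb]. Qed.

Lemma Pstar_clopen (u : set T) : clopen u -> final_segment le u ->
  Pstar le ((fun x => `[< u x >]) : {ptws T -> bool}).
Proof.
move=> cu fu; split; first exact: clopen_cont.
by move=> x y lxy; apply/implyP => /asboolP ux; apply/asboolP; exact: fu ux lxy.
Qed.

Definition Gseq : set_system (seq T) :=
  filter_from [set: seq T] (fun s0 => [set s : seq T | {subset s0 <= s}]).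

Lemma Gseq_proper : ProperFilter Gseq.
Proof.
apply: filter_from_proper; last by move=> s0 _; exists s0.
apply: filter_from_filter; first by exists [::].
move=> s1 s2 _ _; exists (s1 ++ s2) => // s /= H; split => x xs; apply: H;
  by rewrite mem_cat xs ?orbT.
Qed.

Lemma Gseq_mem (t : T) : Gseq [set s | t \in s].
Proof. by exists [:: t] => // s /= /(_ t); rewrite inE eqxx; apply. Qed.

Lemma bool_cvg_eq {X : Type} (F : set_system X) (k : X -> bool) (b : bool) :
  Filter F -> F [set x | k x = b] -> k @ F --> b.
Proof.
move=> FF Fk P Pn.
have Pb := nbhs_singleton Pn.
apply: (@filterS _ F _ [set x | k x = b] (k @^-1` P)) => // x /= ->; exact: Pb.
Qed.

Lemma cont_seq (h : {ptws T -> bool} -> bool) (A : set {ptws T -> bool})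
  (f0 : {ptws T -> bool}) (phi : seq T -> {ptws T -> bool}) :
  {within A, continuous h} -> A f0 -> (forall s, A (phi s)) ->
  (forall t, Gseq [set s | phi s t = f0 t]) ->
  exists s, h (phi s) = h f0.
Proof.
move=> hc Af0 Aphi Hphi.
have GP := Gseq_proper.
have cv : phi @ Gseq --> (f0 : {ptws T -> bool}).
  have := (@pointwise_cvgP T bool (phi @ Gseq) f0 _).2 (fun t => @bool_cvg_eq _ _ _ _ _ (Hphi t)). exact.
have cv2 : phi @ Gseq --> (f0 : subspace A).
  apply/subspace_cvgP => //.
  move=> P WP.
  have H1 : Gseq [set s | A (phi s) -> P (phi s)] := cv _ WP.
  apply: (@filterS _ Gseq _ [set s | A (phi s) -> P (phi s)] (phi @^-1` P)) => //.
  by move=> s /= H; apply: H; exact: Aphi.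
have Hs : Gseq [set s | h (phi s) = h f0] := cv2 _ (hc f0 _ (discrete_set1 (h f0))).
have [s /= hs] := filter_ex Hs.
by exists s.
Qed.

End PS.

Section Dir2.
Variables (T : topologicalType) (le : T -> T -> Prop).

Lemma hom_has (h : {ptws T -> bool} -> bool) (g : T -> {ptws T -> bool}) :
  lattice_hom_on le h -> (forall t, Pstar le (g t) /\ h (g t) = false) ->
  forall s, Pstar le ((fun x => has (fun t => g t x) s) : {ptws T -> bool}) /\
    h ((fun x => has (fun t => g t x) s) : {ptws T -> bool}) = false.
Proof.
move=> [hand hor h0 h1] Hg; elim=> [|t s [IHP IHh]] /=.
  by split; [exact: Pstar_cst | exact: h0].
have [Pg hg] := Hg t; split; first exact: Pstar_or.
by rewrite (hor (g t) _ Pg IHP) hg IHh.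
Qed.

Lemma hom_all (h : {ptws T -> bool} -> bool) (g : T -> {ptws T -> bool}) :
  lattice_hom_on le h -> (forall t, Pstar le (g t) /\ h (g t) = true) ->
  forall s, Pstar le ((fun x => all (fun t => g t x) s) : {ptws T -> bool}) /\
    h ((fun x => all (fun t => g t x) s) : {ptws T -> bool}) = true.
Proof.
move=> [hand hor h0 h1] Hg; elim=> [|t s [IHP IHh]] /=.
  by split; [exact: Pstar_cst | exact: h1].
have [Pg hg] := Hg t; split; first exact: Pstar_and.
by rewrite (hand (g t) _ Pg IHP) hg IHh.
Qed.

End Dir2.

Section Dir2b.
Variables (T : topologicalType) (le : T -> T -> Prop).

Lemma dir_sep_refl : is_poset le -> two_separated le ->
  (forall B C : set T,
      closed B -> final_segment le B ->
      closed C -> initial_segment le C ->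
      set_lt le C B ->
      exists u : set T,
        [/\ clopen u, final_segment le u, B `<=` u & C `&` u = set0]) ->
  reflexive_tposet le.
Proof.
move=> [lerefl leanti letrans] [I [e [econt eiff]]] Hsep h [hhom hcont].
have [hand hor h0 h1] := hhom.
pose B := [set x | forall f, Pstar le f -> h f -> f x].
pose C := [set x | forall f, Pstar le f -> h f = false -> f x = false].
case: (pselect (exists x, B x /\ C x)) => [[x [Bx Cx]]|nBC].
  exists x => f Pf; case hf: (h f); first by rewrite (Bx f Pf hf).
  by rewrite (Cx f Pf hf).
exfalso.
have Bcl : closed B.
  have -> : B = \bigcap_(f in [set f | Pstar le f /\ h f]) [set x | f x].
    apply/seteqP; split => x /=; first by move=> H f [Pf hf]; exact: H.
    by move=> H f Pf hf; exact: H.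
  apply: closed_bigI => f [[cf _] _]; exact: (bool_cont_clopen cf).2.
have Ccl : closed C.
  have -> : C = \bigcap_(f in [set f | Pstar le f /\ h f = false]) (~` [set x | f x]).
    apply/seteqP; split => x /=.
      by move=> H f [Pf hf]; rewrite /= (H f Pf hf).
    by move=> H f Pf hf; apply/negbTE/negP; exact: (H f (conj Pf hf)).
  apply: closed_bigI => f [[cf _] _]; apply: open_closedC; exact: (bool_cont_clopen cf).1.
have Bfin : final_segment le B.
  move=> x y Bx lxy f Pf hf; exact: (implyP (Pf.2 _ _ lxy) (Bx f Pf hf)).
have Cini : initial_segment le C.
  move=> x y Cy lxy f Pf hf; apply/negbTE/negP => fx.
  by move: (implyP (Pf.2 _ _ lxy) fx); rewrite (Cy f Pf hf).
have Pe : forall i, Pstar le ((fun z => e z i) : {ptws T -> bool}).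
  move=> i; split.
    move=> x; have := continuous_comp (econt x) (@proj_cont_gen _ i (e x)); exact.
  by move=> x y lxy; exact: ((eiff x y).1 lxy i).
have CltB : set_lt le C B.
  move=> x y Cx By; split.
    case: (pselect (le x y)) => // nle; exfalso.
    have /existsNP [i /negP] : ~ (forall i, e x i ==> e y i).
      by move=> H; apply: nle; apply/eiff.
    rewrite negb_imply => /andP [exi neyi].
    case hf: (h (fun z => e z i)).
      by move: (By _ (Pe i) hf); rewrite (negbTE neyi).
    by move: (Cx _ (Pe i) hf); rewrite exi.
  by move=> exy; apply: nBC; exists x; split => //; rewrite exy.
have [u [uclo ufin Bu Cu]] := Hsep B C Bcl Bfin Ccl Cini CltB.
pose fu : {ptws T -> bool} := fun x => `[< u x >].
have Pfu : Pstar le fu := Pstar_clopen uclo ufin.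
have GF : Filter (@Gseq T) := @filter_filter _ _ (@Gseq_proper T).
case hu: (h fu).
- have Hg : forall t, exists g : {ptws T -> bool},
      (Pstar le g /\ h g = false) /\ (u t -> g t).
    move=> t; case: (pselect (u t)) => ut; last first.
      exists (fun _ => false); split; first (split; [exact: Pstar_cst|exact: h0]).
      by move/ut.
    have nCt : ~ C t by move=> Ct; have : (C `&` u) t by []; rewrite Cu.
    have /existsNP [g /not_implyP [Pg /not_implyP [hg ngt]]] := nCt.
    by exists g; split => // _; case: (g t) ngt.
  have [g Hg'] := choice Hg.
  have Hhas := hom_has hhom (fun t => (Hg' t).1).
  pose phi s : {ptws T -> bool} := fun x => fu x && has (fun t => g t x) s.
  have Hpt : forall t, Gseq [set s | phi s t = fu t].
    move=> t; case: (pselect (u t)) => ut.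
      apply: filterS (Gseq_mem t) => s /= ts.
      rewrite /phi /fu asboolT //=; apply/hasP; exists t => //.
      exact: (Hg' t).2 ut.
    by exists [::] => // s _; rewrite /phi /fu /= asboolF.
  have [s hs] := @cont_seq _ h (Pstar le) fu phi hcont Pfu
     (fun s => Pstar_and Pfu (Hhas s).1) Hpt.
  move: hs; rewrite /phi (hand _ _ Pfu (Hhas s).1) (Hhas s).2 andbF hu.
  done.
- have Hf : forall t, exists f : {ptws T -> bool},
      (Pstar le f /\ h f = true) /\ (~ u t -> f t = false).
    move=> t; case: (pselect (u t)) => ut.
      exists (fun _ => true); split; first (split; [exact: Pstar_cst|exact: h1]).
      by move/(_ ut).
    have nBt : ~ B t by move=> /Bu.
    have /existsNP [f /not_implyP [Pf /not_implyP [hf nft]]] := nBt.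
    by exists f; split => // _; case: (f t) nft.
  have [g Hg'] := choice Hf.
  have Hall := hom_all hhom (fun t => (Hg' t).1).
  pose phi s : {ptws T -> bool} := fun x => fu x || all (fun t => g t x) s.
  have Hpt : forall t, Gseq [set s | phi s t = fu t].
    move=> t; case: (pselect (u t)) => ut.
      by exists [::] => // s _; rewrite /phi /fu /= asboolT.
    apply: filterS (Gseq_mem t) => s /= ts.
    rewrite /phi /fu asboolF //=; apply/allPn; exists t => //.
    by rewrite (Hg' t).2.
  have [s hs] := @cont_seq _ h (Pstar le) fu phi hcont Pfu
     (fun s => Pstar_or Pfu (Hall s).1) Hpt.
  move: hs; rewrite /phi (hor _ _ Pfu (Hall s).1) (Hall s).2 orbT hu.
  done.
Qed.

End Dir2b.

Lemma clopen_fin (T : topologicalType) (n : nat) (G : 'I_n -> set T) :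
  (forall i, clopen (G i)) -> clopen [set y | forall i, G i y].
Proof.
elim: n G => [|n IH] G HG.
  have -> : [set y | forall i : 'I_0, G i y] = setT.
    by apply/seteqP; split => y // _ [].
  exact: clopenT.
have -> : [set y | forall i : 'I_n.+1, G i y] =
    G ord0 `&` [set y | forall i : 'I_n, G (lift ord0 i) y].
  apply/seteqP; split => y /=; first by move=> H; split => [|i]; apply: H.
  by move=> [H0 H] i; case: (unliftP ord0 i) => [j ->|->].
apply: clopenI; first exact: HG.
by apply: IH => i; apply: HG.
Qed.

Lemma clopen_sel (T : topologicalType) (P : Prop) (A : set T) :
  clopen A -> clopen [set y | P -> A y].
Proof.
move=> cA; case: (pselect P) => p.
  by have -> : [set y | P -> A y] = A by apply/seteqP; split => y /=; [apply| move=> ? _].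
have -> : [set y | P -> A y] = setT by apply/seteqP; split => y // _ /p.
exact: clopenT.
Qed.

Section Dir1.
Variables (T : topologicalType) (le : T -> T -> Prop).

Lemma dir_refl_sep : is_poset le -> two_separated le ->
  is_subbase (clopen_segment le) -> reflexive_tposet le ->
  (forall B C : set T,
      closed B -> final_segment le B ->
      closed C -> initial_segment le C ->
      set_lt le C B ->
      exists u : set T,
        [/\ clopen u, final_segment le u, B `<=` u & C `&` u = set0]).
Proof.
move=> [lerefl leanti letrans] [I [e [econt eiff]]] Hsub Hrefl B C Bcl Bfin Ccl Cini CltB.
apply: contrapT => Hno.
pose Phi : set_system T := [set Q | exists f g : {ptws T -> bool},
  [/\ Pstar le f, B `<=` [set x | f x], Pstar le g, (forall x, C x -> ~~ g x) &
      (forall x, f x -> ~~ g x -> Q x)]].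
have PhiF : Filter Phi.
  constructor.
  - exists (fun _ => true), (fun _ => false); split => //; exact: Pstar_cst.
  - move=> Q1 Q2 [f1 [g1 [Pf1 Bf1 Pg1 Cg1 H1]]] [f2 [g2 [Pf2 Bf2 Pg2 Cg2 H2]]].
    exists (fun x => f1 x && f2 x), (fun x => g1 x || g2 x); split.
    + exact: Pstar_and.
    + by move=> x Bx; rewrite /= (Bf1 x Bx) (Bf2 x Bx).
    + exact: Pstar_or.
    + by move=> x Cx; rewrite negb_or (Cg1 x Cx) (Cg2 x Cx).
    + move=> x /andP [f1x f2x]; rewrite negb_or => /andP [g1x g2x]; split.
        exact: H1.
      exact: H2.
  - move=> Q1 Q2 sQ [f [g [Pf Bf Pg Cg H]]]; exists f, g; split => // x fx gx.
    by apply: sQ; apply: H.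
have PhiP : ProperFilter Phi.
  apply: Build_ProperFilter => // -[f [g [Pf Bf Pg Cg H]]].
  apply: Hno; exists [set x | f x]; split => //.
  - exact: (bool_cont_clopen Pf.1).
  - by move=> x y fx lxy; exact: (implyP (Pf.2 _ _ lxy) fx).
  - apply/seteqP; split => x // [Cx fx].
    by case gx: (g x); [move: (Cg x Cx); rewrite gx | apply: (H x fx); rewrite gx].
have [U [UU PhiU]] := ultraFilterLemma PhiP.
have UPF : ProperFilter U := @ultra_proper _ U UU.
have Ua : forall f, Pstar le f -> B `<=` [set x | f x] -> U [set x | f x].
  move=> f Pf Bf; apply: PhiU; exists f, (fun _ => false); split => //.
  exact: Pstar_cst.
have Ub : forall g, Pstar le g -> (forall x, C x -> ~~ g x) -> ~ U [set x | g x].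
  move=> g Pg Cg Ug.
  have Ung : U [set x | ~~ g x].
    by apply: PhiU; exists (fun _ => true), g; split => //; exact: Pstar_cst.
  apply: (@filter_not_empty _ U _).
  by apply: filterS (filterI Ug Ung) => x /= [gx]; rewrite gx.
pose h (f : {ptws T -> bool}) : bool := `[< U [set x | f x] >].
have hhom : lattice_hom_on le h.
  split.
  - move=> f g _ _; rewrite /h.
    case: (asboolP (U [set x | f x && g x])) => H;
    case: (asboolP (U [set x | f x])) => Hf;
    case: (asboolP (U [set x | g x])) => Hg //=.
    - by exfalso; apply: Hg; apply: filterS H => x /= /andP [].
    - by exfalso; apply: Hf; apply: filterS H => x /= /andP [].
    - by exfalso; apply: Hf; apply: filterS H => x /= /andP [].
    - exfalso; apply: H; apply: filterS (filterI Hf Hg) => x [fx gx] /=.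
      by rewrite fx gx.
  - move=> f g _ _; rewrite /h.
    case: (asboolP (U [set x | f x || g x])) => H;
    case: (asboolP (U [set x | f x])) => Hf;
    case: (asboolP (U [set x | g x])) => Hg //=.
    all: try by exfalso; apply: H; apply: filterS Hf => x /= ->.
    all: try by exfalso; apply: H; apply: filterS Hg => x /= ->; rewrite orbT.
    exfalso.
    have [//|Unf] := in_ultra_setVsetC [set x | f x] UU.
    have [//|Ung] := in_ultra_setVsetC [set x | g x] UU.
    apply: (@filter_not_empty _ U _).
    apply: filterS (filterI H (filterI Unf Ung)) => x /= [/orP [fx|gx] [nf ng]].
      by apply: nf.
    by apply: ng.
  - rewrite /h; case: asboolP => // H; exfalso; apply: (@filter_not_empty _ U _).
    by apply: filterS H.
  - rewrite /h; case: asboolP => // H; exfalso; apply: H.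
    by apply: filterS filterT.
have hcont : {within Pstar le, continuous h}.
  rewrite continuous_subspace_in => f /set_mem Pf.
  move=> P Pn; have Phf := nbhs_singleton Pn.
  case: (nbhs_subspaceP (Pstar le) f) => [_|/(_ Pf) []].
  suff W : within (Pstar le) (nbhs (f : {ptws T -> bool})) [set g | h g = h f].
    by apply: filterS W => g /=; rewrite /from_subspace => ->.
  have Nx : forall t : T, nbhs (f : {ptws T -> bool}) [set g : {ptws T -> bool} | g t = f t].
    move=> t.
    have := (@pointwise_cvgP T bool (nbhs (f : {ptws T -> bool})) f _).1 (@cvg_id _ _) t.
    move=> H; have := H _ _ (discrete_set1 (f t)); exact.
  case hf: (h f); move: hf; rewrite /h => /asboolP Uf.
  - have [c [Cc fc]] : exists c, C c /\ f c.
      apply: contrapT => nc; apply: (Ub f Pf) => // x Cx; apply/negP => fx.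
      by apply: nc; exists x.
    apply: filterS (Nx c) => g /= gc Pg; apply/asboolP; apply: Ua => // b Bb.
    have lcb := (CltB c b Cc Bb).1.
    by apply: (implyP (Pg.2 _ _ lcb)); rewrite gc.
  - have [b [Bb nfb]] : exists b, B b /\ ~~ f b.
      apply: contrapT => nb; apply: Uf; apply: (Ua f Pf) => x Bx.
      by apply: contrapT => fx; apply: nb; exists x; split => //; apply/negP.
    apply: filterS (Nx b) => g /= gb Pg; apply/asboolP; apply: (Ub g Pg) => c Cc.
    have lcb := (CltB c b Cc Bb).1.
    apply/negP => gc; move: (implyP (Pg.2 _ _ lcb) gc).
    by rewrite gb (negbTE nfb).
have [x Hx] := Hrefl h (conj hhom hcont).
have Pe : forall i, Pstar le ((fun z => e z i) : {ptws T -> bool}).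
  move=> i; split.
    move=> y; have := continuous_comp (econt y) (@proj_cont_gen _ i (e y)); exact.
  by move=> y z lyz; exact: ((eiff y z).1 lyz i).
have sep : forall y z, ~ le y z -> exists i, e y i /\ ~~ e z i.
  move=> y z nle.
  have /existsNP [i /negP] : ~ (forall i, e y i ==> e z i).
    by move=> H; apply: nle; apply/eiff.
  by rewrite negb_imply => /andP [? ?]; exists i.
have Cx : forall c, C c -> le c x.
  move=> c Cc; apply: contrapT => /sep [i [eci nexi]].
  have := Hx _ (Pe i); rewrite /h (negbTE nexi).
  case: asboolP => // -[]; apply: Ua => // b Bb.
  by apply: (implyP ((eiff c b).1 (CltB c b Cc Bb).1 i)).
have xB : forall b, B b -> le x b.
  move=> b Bb; apply: contrapT => /sep [i [exi nebi]].
  have := Hx _ (Pe i); rewrite /h exi.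
  case: asboolP => // Ui _; apply: (Ub _ (Pe i) _ Ui) => c Cc.
  apply/negP => eci; move: (implyP ((eiff c b).1 (CltB c b Cc Bb).1 i) eci).
  by rewrite (negbTE nebi).
case: (pselect (C x)) => Cxx.
- have nBx : ~ B x by move=> Bx; have [_] := CltB x x Cxx Bx.
  have [n [F [FS Fx Fsub]]] := (Hsub (~` B)).1 (closed_openC Bcl) x nBx.
  pose W := [set y | forall i, (initial_segment le (F i) -> F i y)].
  have Wcl : clopen W.
    apply: (clopen_fin (G := fun i => [set y | initial_segment le (F i) -> F i y])) => i.
    exact: clopen_sel (FS i).1.
  have nWfin : final_segment le (~` W).
    move=> y z nWy lyz Wz; apply: nWy => i Ii; exact: Ii y z (Wz i Ii) lyz.
  have := Hx _ (Pstar_clopen (clopenC set0 Wcl) nWfin).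
  rewrite /h; case: asboolP => [_|[]].
    by case: asboolP => // nWx _; apply: nWx => i _; exact: Fx.
  apply: filterS (Ua _ (Pstar_clopen (clopenC set0 Wcl) nWfin) _) => [y /= /asboolP //|].
  move=> b Bb /=; apply/asboolP => Wb.
  have : (~` B) b.
    apply: Fsub => i; case: (pselect (initial_segment le (F i))) => Ii.
      exact: Wb.
    have [_ [Fi|//]] := FS i.
    exact: Fi x b (Fx i) (xB b Bb).
  by [].
- have [n [F [FS Fx Fsub]]] := (Hsub (~` C)).1 (closed_openC Ccl) x Cxx.
  pose V := [set y | forall i, (final_segment le (F i) -> F i y)].
  have Vcl : clopen V.
    apply: (clopen_fin (G := fun i => [set y | final_segment le (F i) -> F i y])) => i.
    exact: clopen_sel (FS i).1.
  have Vfin : final_segment le V.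
    move=> y z Vy lyz i Fi; exact: Fi y z (Vy i Fi) lyz.
  have := Hx _ (Pstar_clopen Vcl Vfin).
  rewrite /h; case: asboolP => [UV _|_].
    apply: (Ub _ (Pstar_clopen Vcl Vfin) _ UV) => c Cc; apply/negP => /asboolP Vc.
    have : (~` C) c.
      apply: Fsub => i; case: (pselect (final_segment le (F i))) => Fi.
        exact: Vc.
      have [_ [//|Ii]] := FS i.
      exact: Ii c x (Fx i) (Cx c Cc).
    by [].
  by case: asboolP => // -[] i _; exact: Fx.
Qed.
End Dir1.

Unset Implicit Arguments. Set Strict Implicit.

Theorem mainTheorem15 (T : topologicalType) (le : T -> T -> Prop) :
  is_poset le -> hausdorff_space T ->
  two_separated le ->
  is_subbase (clopen_segment le) ->
  reflexive_tposet le <->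
  (forall B C : set T,
      closed B -> final_segment le B ->
      closed C -> initial_segment le C ->
      set_lt le C B ->
      exists u : set T,
        [/\ clopen u, final_segment le u, B `<=` u & C `&` u = set0]).
Proof.
move=> po _ ts sb; split.
  exact: (dir_refl_sep po ts sb).
exact: (dir_sep_refl po ts).
Qed.
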